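(* For every positive integer $n$, the Aztec diamond $\operatorname{AD}(n)$ has no 180-cover.
   Context: A cell is a unit square $[i,i+1]\times[j,j+1]$ with $i,j\in\mathbb{Z}$, labelled $(i,j)$. The right-oriented trominoes are the translates of $\{(0,0),(1,0),(1,1)\}$ and of $\{(0,0),(0,1),(1,1)\}$; the left-oriented trominoes are the translates of $\{(0,1),(1,0),(1,1)\}$ and of $\{(0,0),(0,1),(1,0)\}$. A 180-cover of a region $R$ is a partition of $R$ into trominoes which are either all right-oriented or all left-oriented. The Aztec diamond $\operatorname{AD}(n)$ is the union of the cells $[a,a+1]\times[b,b+1]$, $a,b\in\mathbb{Z}$, lying completely inside $\{(x,y): |x|+|y|\le n+1\}$. *)

(* Defs.v *)
From Stdlib Require Import ZArith List.
Import ListNotations.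
Open Scope Z_scope.

(* The cell [i,i+1]x[j,j+1] is labelled (i,j). *)
Definition cell : Type := (Z * Z)%type.

Inductive shape : Type := RightA | RightB | LeftA | LeftB.

Definition shape_cells (s : shape) : list cell :=
  match s with
  | RightA => [(0,0); (1,0); (1,1)]
  | RightB => [(0,0); (0,1); (1,1)]
  | LeftA  => [(0,1); (1,0); (1,1)]
  | LeftB  => [(0,0); (0,1); (1,0)]
  end.

Definition right_oriented (s : shape) : Prop := s = RightA \/ s = RightB.
Definition left_oriented (s : shape) : Prop := s = LeftA \/ s = LeftB.

Definition tromino : Type := (shape * (Z * Z))%type.

Definition in_tromino (t : tromino) (c : cell) : Prop :=
  let '(s, (a, b)) := t in
  exists d : cell, In d (shape_cells s) /\ c = (a + fst d, b + snd d).

Definition region : Type := cell -> Prop.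

Definition is_180_cover (R : region) (T : tromino -> Prop) : Prop :=
  ((forall t, T t -> right_oriented (fst t)) \/
   (forall t, T t -> left_oriented (fst t))) /\
  (forall t c, T t -> in_tromino t c -> R c) /\
  (forall c, R c -> exists! t, T t /\ in_tromino t c).

Definition has_180_cover (R : region) : Prop := exists T, is_180_cover R T.

(* Aztec diamond AD(n): the cells [a,a+1]x[b,b+1] lying completely inside
   {(x,y) : |x|+|y| <= n+1}.  Since the region is convex, a unit square lies
   inside it iff its four corners do. *)
Definition in_diamond (n x y : Z) : Prop := Z.abs x + Z.abs y <= n + 1.

Definition AD (n : Z) : region := fun c =>
  let '(a, b) := c in
  in_diamond n a b /\ in_diamond n (a + 1) b /\
  in_diamond n a (b + 1) /\ in_diamond n (a + 1) (b + 1).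

(* Main.v *)
Require Import Defs.
From Stdlib Require Import ZArith List Permutation Lia.
Import ListNotations.
Open Scope Z_scope.

Definition sumZ (l : list Z) : Z := fold_right Z.add 0 l.

Lemma sumZ_app l1 l2 : sumZ (l1 ++ l2) = sumZ l1 + sumZ l2.
Proof. induction l1; simpl; lia. Qed.

Lemma sumZ_perm (l l' : list Z) : Permutation l l' -> sumZ l = sumZ l'.
Proof. induction 1; simpl; lia. Qed.

Definition tcells (t : tromino) : list cell :=
  let '(s, (a, b)) := t in map (fun d => (a + fst d, b + snd d)) (shape_cells s).

Lemma in_tromino_iff t c : in_tromino t c <-> In c (tcells t).
Proof.
  destruct t as [s [a b]]; unfold in_tromino, tcells; rewrite in_map_iff.
  split; intros [d [H1 H2]]; exists d; split; auto.
Qed.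

Lemma tcells_NoDup t : NoDup (tcells t).
Proof.
  destruct t as [s [a b]]; destruct s; simpl;
  repeat constructor; simpl; intros H; repeat destruct H as [H|H];
  try injection H; try lia; try contradiction.
Qed.

Definition cell_eq_dec : forall x y : cell, {x = y} + {x <> y}.
Proof. decide equality; apply Z.eq_dec. Defined.

Lemma sum_filter (w : cell -> Z) (P : cell -> bool) L :
  sumZ (map w L) = sumZ (map w (filter P L)) + sumZ (map w (filter (fun x => negb (P x)) L)).
Proof. induction L as [|x L IH]; simpl; auto. destruct (P x); simpl; lia. Qed.

Lemma filter_len {A} (f : A -> bool) l : (length (filter f l) <= length l)%nat.
Proof. induction l; simpl; auto. destruct (f a); simpl; lia. Qed.

Lemma key (w : cell -> Z) : forall (m : nat) (L : list cell) (T : tromino -> Prop),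
  (length L <= m)%nat -> NoDup L ->
  (forall t, T t -> sumZ (map w (tcells t)) = 0) ->
  (forall t c, T t -> In c (tcells t) -> In c L) ->
  (forall c, In c L -> exists t, T t /\ In c (tcells t) /\
        forall t', T t' -> In c (tcells t') -> t' = t) ->
  sumZ (map w L) = 0.
Proof.
  induction m as [|m IH]; intros L T Hlen HND Hw Hin Hex.
  - destruct L; simpl in *; [reflexivity | lia].
  - destruct L as [|c L0]; [reflexivity|].
    destruct (Hex c (or_introl eq_refl)) as [t [Tt [ct Hu]]].
    set (P := fun x => if in_dec cell_eq_dec x (tcells t) then true else false).
    rewrite (sum_filter w P).
    assert (E1 : sumZ (map w (filter P (c :: L0))) = 0).
    { rewrite <- (Hw t Tt). apply sumZ_perm, Permutation_map, NoDup_Permutation.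
      - apply NoDup_filter; auto.
      - apply tcells_NoDup.
      - intros x; rewrite filter_In; unfold P.
        destruct (in_dec cell_eq_dec x (tcells t)); split; intros H; try tauto.
        + split; auto. eapply Hin; eauto.
        + destruct H; discriminate. }
    rewrite E1.
    assert (Pc : P c = true) by (unfold P; destruct (in_dec cell_eq_dec c (tcells t)); tauto).
    simpl filter at 1. rewrite Pc. simpl negb. cbv iota.
    rewrite (IH _ (fun t' => T t' /\ t' <> t)); auto.
    + simpl in Hlen. pose proof (filter_len (fun x => negb (P x)) L0). lia.
    + apply NoDup_filter. inversion HND; auto.
    + intros t' Ht'. apply Hw, Ht'.
    + intros t' x [Tt' Hne] Hx. rewrite filter_In. split.
      * assert (In x (c :: L0)) by (eapply Hin; eauto).
        destruct H as [<-|H]; auto.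
        exfalso. apply Hne. rewrite (Hu t' Tt' Hx). reflexivity.
      * unfold P. destruct (in_dec cell_eq_dec x (tcells t)) as [i|i]; auto.
        exfalso. assert (Hx' : In x (c :: L0)) by (eapply Hin; eauto).
        destruct (Hex x Hx') as [t0 [_ [_ Hu0]]].
        apply Hne. rewrite (Hu0 t' Tt' Hx), (Hu0 t Tt i). reflexivity.
    + intros x Hx. rewrite filter_In in Hx. destruct Hx as [Hx HP].
      assert (Hx' : In x (c :: L0)) by (right; auto).
      destruct (Hex x Hx') as [t0 [T0 [i0 Hu0]]].
      exists t0. split; [split; auto|]. 
      * intros ->. unfold P in HP. destruct (in_dec cell_eq_dec x (tcells t)); try discriminate. tauto.
      * split; auto. intros t' [Tt' _] H. apply Hu0; auto.
Qed.

Ltac zl := Z.div_mod_to_equations; lia.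

Definition G (s : Z) : Z := match s mod 3 with 0 => -1 | 1 => 0 | _ => 1 end.

Lemma G_mod x y : x mod 3 = y mod 3 -> G x = G y.
Proof. unfold G; intros ->; reflexivity. Qed.

Lemma G_sum_all x y z : x mod 3 <> y mod 3 -> y mod 3 <> z mod 3 -> x mod 3 <> z mod 3 ->
  G x + G y + G z = 0.
Proof.
  intros. unfold G.
  assert (x mod 3 = 0 \/ x mod 3 = 1 \/ x mod 3 = 2) as Hx by (zl).
  assert (y mod 3 = 0 \/ y mod 3 = 1 \/ y mod 3 = 2) as Hy by (zl).
  assert (z mod 3 = 0 \/ z mod 3 = 1 \/ z mod 3 = 2) as Hz by (zl).
  destruct Hx as [Hx|[Hx|Hx]]; destruct Hy as [Hy|[Hy|Hy]]; destruct Hz as [Hz|[Hz|Hz]];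
  rewrite Hx, Hy, Hz in *; try lia; reflexivity.
Qed.

Fixpoint SG (s d : Z) (m : nat) : Z :=
  match m with O => 0 | S m' => G s + SG (s + d) d m' end.

Lemma SG_congr d m : forall s s', s mod 3 = s' mod 3 -> SG s d m = SG s' d m.
Proof.
  induction m; intros s s' H; simpl; auto.
  rewrite (G_mod s s' H), (IHm (s+d) (s'+d)); auto. zl.
Qed.

Lemma SG_period s d m : d mod 3 <> 0 -> SG s d (3 + m) = SG s d m.
Proof.
  intros Hd. simpl.
  rewrite (SG_congr d m (s + d + d + d) s) by zl.
  pose proof (G_sum_all s (s+d) (s+d+d)). assert (G s + G (s+d) + G (s+d+d) = 0) by (apply G_sum_all; zl). lia.
Qed.

Lemma SG_mod s d m : d mod 3 <> 0 -> SG s d m = SG (s mod 3) d (m mod 3).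
Proof.
  intros Hd. rewrite (SG_congr d _ s (s mod 3)) by zl.
  rewrite (Nat.div_mod_eq m 3) at 1. generalize (m / 3)%nat as q.
  induction q. { simpl. reflexivity. }
  replace (3 * S q + m mod 3)%nat with (3 + (3 * q + m mod 3))%nat by lia.
  rewrite SG_period; auto.
Qed.

Lemma SG_eq d m : forall j s,
  sumZ (map (fun i => G (s + d * Z.of_nat i)) (seq j m)) = SG (s + d * Z.of_nat j) d m.
Proof.
  induction m; intros j s; simpl; auto.
  rewrite IHm. f_equal. apply SG_congr. rewrite Nat2Z.inj_succ. f_equal. ring.
Qed.

Lemma NoDup_prod {A B} (l1 : list A) (l2 : list B) :
  NoDup l1 -> NoDup l2 -> NoDup (list_prod l1 l2).
Proof.
  induction 1 as [|x l1 Hx H1 IH]; intros H2; simpl; [constructor|].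
  apply NoDup_app; auto.
  - apply FinFun.Injective_map_NoDup; auto. intros y y' E; injection E; auto.
  - intros [a b] Ha Hb. apply in_map_iff in Ha. destruct Ha as [y [E _]]. injection E; intros; subst.
    apply in_prod_iff in Hb. tauto.
Qed.

Definition fA (N : nat) (p : nat * nat) : cell :=
  (- Z.of_nat N + Z.of_nat (fst p) + Z.of_nat (snd p), -1 + Z.of_nat (fst p) - Z.of_nat (snd p)).
Definition fB (N : nat) (p : nat * nat) : cell :=
  (- Z.of_nat N + Z.of_nat (fst p) + Z.of_nat (snd p), Z.of_nat (fst p) - Z.of_nat (snd p)).

Definition ADL (N : nat) : list cell :=
  map (fA N) (list_prod (seq 0 (S N)) (seq 0 N)) ++ map (fB N) (list_prod (seq 0 N) (seq 0 (S N))).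

Lemma ADL_NoDup N : NoDup (ADL N).
Proof.
  unfold ADL. apply NoDup_app.
  - apply FinFun.Injective_map_NoDup. 
    + intros [i k] [i' k'] E. unfold fA in E; cbn [fst snd] in E. pose proof (f_equal fst E); pose proof (f_equal snd E); cbn [fst snd] in *. f_equal; lia.
    + apply NoDup_prod; apply seq_NoDup.
  - apply FinFun.Injective_map_NoDup. 
    + intros [i k] [i' k'] E. unfold fB in E; cbn [fst snd] in E. pose proof (f_equal fst E); pose proof (f_equal snd E); cbn [fst snd] in *. f_equal; lia.
    + apply NoDup_prod; apply seq_NoDup.
  - intros c H1 H2. apply in_map_iff in H1, H2.
    destruct H1 as [[i k] [E1 _]], H2 as [[i' k'] [E2 _]].
    unfold fA, fB in *; cbn [fst snd] in *. subst c. pose proof (f_equal fst E2); pose proof (f_equal snd E2); cbn [fst snd] in *. lia.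
Qed.

Lemma ADL_in N c : In c (ADL N) <-> AD (Z.of_nat N) c.
Proof.
  destruct c as [a b]. unfold ADL, AD, in_diamond. rewrite in_app_iff, !in_map_iff. split.
  - intros [[[i k] [E H]]|[[i k] [E H]]]; apply in_prod_iff in H; rewrite !in_seq in H;
    unfold fA, fB in E; cbn [fst snd] in E; pose proof (f_equal fst E); pose proof (f_equal snd E); cbn [fst snd] in *; lia.
  - intros H.
    destruct (Z.eq_dec ((a + b + Z.of_nat N + 1) mod 2) 0) as [Hp|Hp].
    + left. exists (Z.to_nat ((a + b + Z.of_nat N + 1) / 2), Z.to_nat ((a - b + Z.of_nat N - 1) / 2)).
      rewrite in_prod_iff, !in_seq. unfold fA; cbn [fst snd].
      split; [f_equal|]; Z.div_mod_to_equations; lia.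
    + right. exists (Z.to_nat ((a + b + Z.of_nat N) / 2), Z.to_nat ((a - b + Z.of_nat N) / 2)).
      rewrite in_prod_iff, !in_seq. unfold fB; cbn [fst snd].
      split; [f_equal|]; Z.div_mod_to_equations; lia.
Qed.

Definition wR (c : cell) : Z := G (fst c + snd c).
Definition wL (c : cell) : Z := G (snd c - fst c - 1).

Lemma sum_prod {A B} (h : A * B -> Z) l1 l2 :
  sumZ (map h (list_prod l1 l2)) = sumZ (map (fun x => sumZ (map (fun y => h (x, y)) l2)) l1).
Proof.
  induction l1; simpl; auto. rewrite map_app, sumZ_app, map_map, IHl1. reflexivity.
Qed.

Lemma sum_const {A} (c : Z) (l : list A) : sumZ (map (fun _ => c) l) = Z.of_nat (length l) * c.
Proof. induction l; [reflexivity|]. cbn [map length]. unfold sumZ in *; cbn [fold_right]. rewrite IHl, Nat2Z.inj_succ. ring. Qed.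

Lemma sum_scale {A} (c : Z) (f : A -> Z) l : sumZ (map (fun x => c * f x) l) = c * sumZ (map f l).
Proof. induction l as [|x l IH]; [simpl; ring|]. cbn [map]. unfold sumZ in *; cbn [fold_right]. rewrite IH. ring. Qed.

Lemma sumR N : sumZ (map wR (ADL N)) =
  Z.of_nat N * SG (- Z.of_nat N - 1) 2 (S N) + (Z.of_nat N + 1) * SG (- Z.of_nat N) 2 N.
Proof.
  unfold ADL. rewrite map_app, sumZ_app, !map_map, !sum_prod. f_equal.
  - rewrite (map_ext _ (fun i => Z.of_nat N * G (- Z.of_nat N - 1 + 2 * Z.of_nat i))).
    + rewrite sum_scale, SG_eq. f_equal. apply SG_congr. f_equal. simpl. ring.
    + intros i. rewrite (map_ext _ (fun _ => G (- Z.of_nat N - 1 + 2 * Z.of_nat i))).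
      * rewrite sum_const, length_seq. reflexivity.
      * intros k. unfold wR, fA; cbn [fst snd]. apply G_mod. f_equal. ring.
  - rewrite (map_ext _ (fun i => (Z.of_nat N + 1) * G (- Z.of_nat N + 2 * Z.of_nat i))).
    + rewrite sum_scale, SG_eq. f_equal. apply SG_congr. f_equal. simpl. ring.
    + intros i. rewrite (map_ext _ (fun _ => G (- Z.of_nat N + 2 * Z.of_nat i))).
      * rewrite sum_const, length_seq. f_equal. lia.
      * intros k. unfold wR, fB; cbn [fst snd]. apply G_mod. f_equal. ring.
Qed.

Lemma sumL N : sumZ (map wL (ADL N)) =
  (Z.of_nat N + 1) * SG (Z.of_nat N - 2) (-2) N + Z.of_nat N * SG (Z.of_nat N - 1) (-2) (S N).
Proof.
  unfold ADL. rewrite map_app, sumZ_app, !map_map, !sum_prod. f_equal.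
  - rewrite (map_ext _ (fun i => SG (Z.of_nat N - 2) (-2) N)).
    + rewrite sum_const, length_seq. f_equal. lia.
    + intros i. rewrite (map_ext _ (fun k => G (Z.of_nat N - 2 + (-2) * Z.of_nat k))).
      * rewrite SG_eq. apply SG_congr. f_equal. simpl. ring.
      * intros k. unfold wL, fA; cbn [fst snd]. apply G_mod. f_equal. ring.
  - rewrite (map_ext _ (fun i => SG (Z.of_nat N - 1) (-2) (S N))).
    + rewrite sum_const, length_seq. f_equal.
    + intros i. rewrite (map_ext _ (fun k => G (Z.of_nat N - 1 + (-2) * Z.of_nat k))).
      * rewrite SG_eq. apply SG_congr. f_equal. simpl. ring.
      * intros k. unfold wL, fB; cbn [fst snd]. apply G_mod. f_equal. ring.
Qed.

Lemma SG_red s s0 d q r : d mod 3 <> 0 -> s mod 3 = s0 mod 3 -> SG s d (3 * q + r) = SG s0 d r.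
Proof.
  intros Hd Hs. rewrite (SG_congr d _ s s0 Hs).
  induction q. { simpl. reflexivity. }
  replace (3 * S q + r)%nat with (3 + (3 * q + r))%nat by lia.
  rewrite SG_period; auto.
Qed.

Lemma final_ne N : (1 <= N)%nat -> sumZ (map wR (ADL N)) <> 0 /\ sumZ (map wL (ADL N)) <> 0.
Proof.
  intros HN. rewrite sumR, sumL.
  assert (exists q r, N = (3 * q + r)%nat /\ (r < 3)%nat) as [q [r [-> Hr]]]
    by (exists (N / 3)%nat, (N mod 3)%nat; split; [apply Nat.div_mod_eq | apply Nat.mod_upper_bound; lia]).
  destruct r as [|[|[|r]]]; [| | | lia].
  - replace (S (3 * q + 0)) with (3 * q + 1)%nat by lia.
    rewrite (SG_red _ 2 2 q 1), (SG_red _ 0 2 q 0), (SG_red _ 1 (-2) q 0), (SG_red _ 2 (-2) q 1)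
      by zl.
    simpl SG. unfold G. simpl. lia.
  - replace (S (3 * q + 1)) with (3 * q + 2)%nat by lia.
    rewrite (SG_red _ 1 2 q 2), (SG_red _ 2 2 q 1), (SG_red _ 2 (-2) q 1), (SG_red _ 0 (-2) q 2)
      by zl.
    simpl SG. unfold G. simpl. lia.
  - replace (S (3 * q + 2)) with (3 * (q + 1) + 0)%nat by lia.
    rewrite (SG_red _ 0 2 (q+1) 0), (SG_red _ 1 2 q 2), (SG_red _ 0 (-2) q 2), (SG_red _ 1 (-2) (q+1) 0)
      by zl.
    simpl SG. unfold G. simpl. lia.
Qed.

Lemma G3 x y z : x mod 3 <> y mod 3 -> y mod 3 <> z mod 3 -> x mod 3 <> z mod 3 ->
  G x + (G y + (G z + 0)) = 0.
Proof. intros. pose proof (G_sum_all x y z). lia. Qed.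

Theorem corollary5 (n : Z) (hn : 1 <= n) : ~ has_180_cover (AD n).
Proof.
  intros [T [Hor [Hin Hun]]].
  set (N := Z.to_nat n). assert (En : n = Z.of_nat N) by (unfold N; lia).
  destruct (final_ne N ltac:(lia)) as [HR HL].
  assert (Hmem : forall c, In c (ADL N) <-> AD n c) by (intro; rewrite En; apply ADL_in).
  assert (Hcells : forall t c, T t -> In c (tcells t) -> In c (ADL N)).
  { intros t c Tt H. apply Hmem. apply (Hin t c Tt). apply in_tromino_iff; auto. }
  assert (Hex : forall c, In c (ADL N) -> exists t, T t /\ In c (tcells t) /\
        forall t', T t' -> In c (tcells t') -> t' = t).
  { intros c Hc. apply Hmem in Hc. destruct (Hun c Hc) as [t [[Tt it] U]].
    exists t. split; auto. split; [apply in_tromino_iff; auto|].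
    intros t' Tt' H. symmetry. apply U. split; auto. apply in_tromino_iff; auto. }
  destruct Hor as [Hr|Hl].
  - apply HR. apply (key wR (length (ADL N)) (ADL N) T); auto using ADL_NoDup.
    intros t Tt. destruct (Hr t Tt) as [E|E]; destruct t as [s [a b]]; simpl in E; subst s;
    unfold sumZ, tcells, wR; cbn [map shape_cells fst snd fold_right]; apply G3; zl.
  - apply HL. apply (key wL (length (ADL N)) (ADL N) T); auto using ADL_NoDup.
    intros t Tt. destruct (Hl t Tt) as [E|E]; destruct t as [s [a b]]; simpl in E; subst s;
    unfold sumZ, tcells, wL; cbn [map shape_cells fst snd fold_right]; apply G3; zl.
Qed.
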